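(* Let $n=2^\alpha\prod_{i=1}^{k}p_i^{t_i}$, where $\alpha\ge 0$ is an integer, $k\ge 1$, $p_1,\dots,p_k$ are distinct odd primes and $t_1,\dots,t_k\ge 1$ are integers. Then the lattice $\widetilde\Pi(D_n)$ contains a sublattice isomorphic to the pentagon lattice $N_5$ if and only if either $\alpha\ge 2$, or $\alpha=1$ and $k\ge 2$.
   Context: For a positive integer $n$, $D_n=\langle r,s\mid r^n=e,\ s^2=e,\ srs^{-1}=r^{-1}\rangle$ is the dihedral group of order $2n$. For a finite group $G$ and a subgroup $H\le G$, let $\pi_e(H)=\{o(x)\mid x\in H\}$. Let $\mathcal{L}(G)$ be the set of subgroups of $G$; define $H_1\equiv H_2$ iff $\pi_e(H_1)=\pi_e(H_2)$, with class $[H]$. The poset $\widetilde\Pi(G)$ is $\mathcal{L}(G)/\!\equiv$ ordered by $[H_1]\lesssim[H_2]$ iff $\pi_e(H_1)\subseteq\pi_e(H_2)$; for $G=D_n$ it is a lattice. $N_5$ is the five-element lattice $\{0,a,b,c,1\}$ with $0<a<b<1$, $0<c<1$, and $c$ incomparable to $a$ and $b$. *)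

(* Defs.v *)
From mathcomp Require Import all_boot all_fingroup all_solvable.
Set Implicit Arguments.
Unset Strict Implicit.
Unset Printing Implicit Defensive.
Local Open Scope group_scope.

(* The paper's D_n (order 2n) is MathComp's 'D_(n.*2) (extremal.v),
   valid for 2n >= 4. *)
Notation Dih n := ('D_(n.*2))%type.

Definition piE (gT : finGroupType) (H : {set gT}) : seq nat :=
  [seq #[x] | x in H].

Definition piE_le (gT : finGroupType) (H1 H2 : {set gT}) : Prop :=
  {subset piE H1 <= piE H2}.

Definition isJoinPi (gT : finGroupType) (G A B K : {group gT}) : Prop :=
  [/\ piE_le A K, piE_le B K &
      forall L : {group gT}, L \subset G -> piE_le A L -> piE_le B L -> piE_le K L].

Definition isMeetPi (gT : finGroupType) (G A B K : {group gT}) : Prop :=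
  [/\ piE_le K A, piE_le K B &
      forall L : {group gT}, L \subset G -> piE_le L A -> piE_le L B -> piE_le L K].

Inductive N5 := N5_0 | N5_a | N5_b | N5_c | N5_1.

Definition N5_le (x y : N5) : bool :=
  match x, y with
  | N5_0, _ => true
  | _, N5_1 => true
  | N5_a, N5_a | N5_a, N5_b => true
  | N5_b, N5_b => true
  | N5_c, N5_c => true
  | _, _ => false
  end.

Definition N5_join (x y : N5) : N5 :=
  if N5_le x y then y else if N5_le y x then x else N5_1.

Definition N5_meet (x y : N5) : N5 :=
  if N5_le x y then x else if N5_le y x then y else N5_0.

(* Pi~(G) contains a sublattice isomorphic to N5: an injective lattice
   homomorphism N5 -> Pi~(G) (classes represented by subgroups of G). *)
Definition has_N5_sublattice (gT : finGroupType) (G : {group gT}) : Prop :=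
  exists f : N5 -> {group gT},
    [/\ forall i, f i \subset G,
        forall i j, piE (f i) =i piE (f j) -> i = j,
        forall i j, isJoinPi G (f i) (f j) (f (N5_join i j)) &
        forall i j, isMeetPi G (f i) (f j) (f (N5_meet i j))].

(* Main.v *)
From mathcomp Require Import all_boot all_fingroup all_solvable.
Require Import Defs.
From mathcomp Require Import zify.
Set Implicit Arguments. Unset Strict Implicit. Unset Printing Implicit Defensive.

Definition Pe (e : nat) (b : bool) := [pred d : nat | (d %| e) || b && (d == 2)].
Definition subb e1 b1 e2 b2 := ((e1 %| e2) || (e1 == 2) && b2) && (b1 ==> (2 %| e2) || b2).

Lemma dvd2 d : d %| 2 -> d = 1 \/ d = 2.
Proof. by case: d => [|[|[|d]]] //; auto. Qed.

Lemma subbP e1 b1 e2 b2 : 0 < e1 -> reflect {subset Pe e1 b1 <= Pe e2 b2} (subb e1 b1 e2 b2).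
Proof.
move=> e10; apply: (iffP idP).
  case/andP=> h1 h2 d; rewrite !inE => /orP[de | /andP[bb /eqP->]].
    case/orP: h1 => [/(dvdn_trans de) -> // | /andP[/eqP e12 ->]].
    by move: de; rewrite e12 => /dvd2[] ->; rewrite ?dvd1n ?eqxx ?orbT.
  by rewrite eqxx andbT (implyP h2 bb).
move=> S; apply/andP; split.
  by have := S e1; rewrite !inE dvdnn [b2 && _]andbC => /(_ isT).
apply/implyP=> bb; have := S 2; rewrite !inE bb eqxx andbT orbT => /(_ isT).
by rewrite andbT.
Qed.

Definition ell e (b : bool) : nat := if 2 %| e then (if e == 2 then 1 else 2) else b.
Definition kap e b q : nat := if q == 2 then ell e b else logn q e.

Lemma log2_dvd e : 0 < e -> (2 %| e) = (0 < logn 2 e).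
Proof. by move=> e0; rewrite -{1}(expn1 2) pfactor_dvdn. Qed.

Lemma log2_le1 e : 0 < e -> ~~ (4 %| e) -> logn 2 e <= 1.
Proof. by move=> e0; rewrite leqNgt -(@pfactor_dvdn 2 2 e). Qed.

Lemma logq2 q : q != 2 -> logn q 2 = 0.
Proof. by move=> q2; rewrite logn_prime // (negbTE q2). Qed.

Lemma dvd_log e1 e2 : 0 < e1 -> 0 < e2 -> (forall q, logn q e1 <= logn q e2) -> e1 %| e2.
Proof.
move=> e10 e20 H; apply/dvdn_partP => // p; rewrite mem_primes => /and3P[pp _ _].
by rewrite p_part pfactor_dvdn.
Qed.

Lemma ell_ge1 e b : 0 < ell e b = (2 %| e) || b.
Proof. by rewrite /ell; case: (2 %| e); case: (e == 2); case: b. Qed.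

Lemma ell_le2 e b : ell e b <= 2.
Proof. by rewrite /ell; case: (2 %| e); case: (e == 2); case: b. Qed.

Lemma kapP e1 b1 e2 b2 : 0 < e1 -> 0 < e2 -> ~~ (4 %| e1) -> ~~ (4 %| e2) ->
  subb e1 b1 e2 b2 <-> (forall q, kap e1 b1 q <= kap e2 b2 q).
Proof.
move=> e10 e20 n41 n42; split.
  case/andP=> h1 h2 q; rewrite /kap; case: eqP => [_ | /eqP q2].
    case/orP: h1 => [de | /andP[/eqP e12 bb2]].
      rewrite /ell; case: ifP => [ev1 | od1].
        have ev2 : 2 %| e2 by apply: dvdn_trans de.
        rewrite ev2; case: (e1 =P 2) => [|ne]; first by case: (e2 == 2).
        case: (e2 =P 2) => // E2; move: de; rewrite E2 => /dvd2[E|E].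
          by rewrite E in ev1.
        by case: ne.
      case: b1 h2 => //= /orP[ev2|bb2]; first by rewrite ev2; case: (e2 == 2).
      by rewrite bb2; case: ifP => //; case: (e2 == 2).
    rewrite /ell e12 /= ; case: ifP => //; first by case: (e2 == 2).
    by rewrite bb2.
  case/orP: h1 => [de | /andP[/eqP -> _]]; first exact: dvdn_leq_log.
  by rewrite logq2.
move=> H; have H2 := H 2; rewrite /kap eqxx in H2.
apply/andP; split; last first.
  apply/implyP => bb1; rewrite -ell_ge1; apply: leq_trans H2.
  by rewrite ell_ge1 bb1 orbT.
case: (e1 =P 2) => [E1 | ne1].
  rewrite E1 /= -ell_ge1; apply: leq_trans H2; by rewrite E1.
apply/orP; left; apply: dvd_log => // q.
case: (q =P 2) => [-> | /eqP q2]; last by have := H q; rewrite /kap (negbTE q2).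
have := log2_le1 e10 n41; rewrite leq_eqVlt ltnS leqn0 => /orP[/eqP l1 | /eqP ->] //.
have ev1 : 2 %| e1 by rewrite log2_dvd // l1.
move: H2; rewrite /ell ev1 (introF eqP ne1) l1.
case: ifP => [ev2 | od2]; last by case: (b2).
by rewrite -log2_dvd.
Qed.

Lemma ne2_dvd e m : 2 %| e -> e != 2 -> e %| m -> m != 2.
Proof.
move=> ev ne em; apply/eqP => m2; move: em; rewrite m2 => /dvd2[E|E].
  by rewrite E in ev.
by rewrite E in ne.
Qed.

Lemma ell_odd e b : ~~ (2 %| e) -> ell e b = b.
Proof. by rewrite /ell => /negbTE ->. Qed.

Lemma ell_ev e b : 2 %| e -> ell e b = if e == 2 then 1 else 2.
Proof. by rewrite /ell => ->. Qed.

Definition okp n (x : nat * bool) := (0 < x.1) && (x.1 %| n).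

Lemma joinR n x y : okp n x -> okp n y -> exists z, okp n z /\
  forall q, kap z.1 z.2 q = maxn (kap x.1 x.2 q) (kap y.1 y.2 q).
Proof.
case: x => e1 b1; case: y => e2 b2; rewrite /okp /= => /andP[e10 e1n] /andP[e20 e2n].
case: (boolP ((e1 == 2) && ~~ (2 %| e2))) => [/andP[/eqP E1 od2] | nsp1].
  exists (e2, true); split; first by rewrite /okp /= e20.
  move=> q; rewrite /kap /=; case: eqP => [_ | /eqP q2].
    by rewrite E1 !(ell_odd _ od2) (@ell_ev 2) //; case: (b2).
  by rewrite E1 (logq2 q2) max0n.
case: (boolP ((e2 == 2) && ~~ (2 %| e1))) => [/andP[/eqP E2 od1] | nsp2].
  exists (e1, true); split; first by rewrite /okp /= e10.
  move=> q; rewrite /kap /=; case: eqP => [_ | /eqP q2].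
    by rewrite E2 !(ell_odd _ od1) (@ell_ev 2) //; case: (b1).
  by rewrite E2 (logq2 q2) maxn0.
exists (lcmn e1 e2, b1 || b2); split.
  by rewrite /okp /= lcmn_gt0 e10 e20 dvdn_lcm e1n e2n.
move=> q; rewrite /kap /=; case: eqP => [_ | /eqP q2]; last by rewrite logn_lcm.
have l0 : 0 < lcmn e1 e2 by rewrite lcmn_gt0 e10.
case: (boolP (2 %| e1)) => ev1.
  have evl : 2 %| lcmn e1 e2 by apply: dvdn_trans ev1 (dvdn_lcml _ _).
  rewrite (ell_ev _ evl) (ell_ev _ ev1).
  case: (e1 =P 2) => [E1 | /eqP ne1]; last first.
    rewrite (negbTE (ne2_dvd ev1 ne1 (dvdn_lcml _ _))).
    by rewrite /maxn; case: ifP => // /ltnW; move: (ell_le2 e2 b2); lia.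
  case: (boolP (2 %| e2)) => ev2; last by rewrite E1 eqxx ev2 in nsp1.
  rewrite (ell_ev _ ev2); case: (e2 =P 2) => [E2 | /eqP ne2].
    by rewrite E1 E2.
  by rewrite (negbTE (ne2_dvd ev2 ne2 (dvdn_lcmr _ _))).
case: (boolP (2 %| e2)) => ev2.
  have evl : 2 %| lcmn e1 e2 by apply: dvdn_trans ev2 (dvdn_lcmr _ _).
  rewrite (ell_ev _ evl) (ell_ev _ ev2) (ell_odd _ ev1).
  case: (e2 =P 2) => [E2 | /eqP ne2]; first by rewrite E2 eqxx ev1 in nsp2.
  by rewrite (negbTE (ne2_dvd ev2 ne2 (dvdn_lcmr _ _))); case: (b1).
have odl : ~~ (2 %| lcmn e1 e2).
  have l1 : logn 2 e1 = 0 by apply/eqP; rewrite -leqn0 leqNgt -log2_dvd.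
  have l2 : logn 2 e2 = 0 by apply/eqP; rewrite -leqn0 leqNgt -log2_dvd.
  by rewrite log2_dvd // logn_lcm // l1 l2.
by rewrite !ell_odd //; case: (b1); case: (b2).
Qed.

Definition Hg n := forall e1 e2, e1 %| n -> e2 %| n -> 2 %| e1 -> 2 %| e2 ->
  e1 != 2 -> e2 != 2 -> gcdn e1 e2 != 2.

Lemma meetR n x y : Hg n -> okp n x -> okp n y -> exists z, okp n z /\
  forall q, kap z.1 z.2 q = minn (kap x.1 x.2 q) (kap y.1 y.2 q).
Proof.
move=> hg; case: x => e1 b1; case: y => e2 b2; rewrite /okp /= => /andP[e10 e1n] /andP[e20 e2n].
have g0 : 0 < gcdn e1 e2 by rewrite gcdn_gt0 e10.
exists (gcdn e1 e2, ((2 %| e1) || b1) && ((2 %| e2) || b2)); split.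
  by rewrite /okp /= g0 (dvdn_trans (dvdn_gcdl _ _)).
move=> q; rewrite /kap /=; case: eqP => [_ | /eqP q2]; last by rewrite logn_gcd.
case: (boolP ((2 %| e1) && (2 %| e2))) => [/andP[ev1 ev2] | nev].
  have evg : 2 %| gcdn e1 e2 by rewrite dvdn_gcd ev1.
  rewrite !ell_ev //.
  case: (e1 =P 2) => [E1 | /eqP ne1].
    have -> : gcdn e1 e2 = 2.
      by move: (dvdn_gcdl e1 e2) evg; rewrite E1 => /dvd2[->|->].
    by case: (e2 == 2).
  case: (e2 =P 2) => [E2 | /eqP ne2].
    have -> : gcdn e1 e2 = 2.
      by move: (dvdn_gcdr e1 e2) evg; rewrite E2 => /dvd2[->|->].
    by [].
  by rewrite (negbTE (hg _ _ e1n e2n ev1 ev2 ne1 ne2)).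
have odg : ~~ (2 %| gcdn e1 e2) by rewrite dvdn_gcd.
rewrite ell_odd // -!ell_ge1.
have : (ell e1 b1 <= 1) || (ell e2 b2 <= 1).
  move: nev; rewrite negb_and => /orP[o|o]; first by rewrite (ell_odd _ o) leq_b1.
  by rewrite (ell_odd _ o) leq_b1 orbT.
move: (ell_le2 e1 b1) (ell_le2 e2 b2).
case: (ell e1 b1) => [|[|[|]]] //; case: (ell e2 b2) => [|[|[|]]] //.
Qed.

Definition lep (x y : nat * bool) := subb x.1 x.2 y.1 y.2.
Definition K (x : nat * bool) q := kap x.1 x.2 q.

Lemma n5nat a b c : a <= b -> maxn a c = maxn b c -> minn a c = minn b c -> b <= a.
Proof. lia. Qed.

Section NoN5.
Variable n : nat.
Hypotheses (n4 : ~~ (4 %| n)) (hg : Hg n).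

Lemma okn4 x : okp n x -> ~~ (4 %| x.1).
Proof. by case/andP=> _ xn; apply: contra n4 => h; apply: dvdn_trans h xn. Qed.

Lemma lepK x y : okp n x -> okp n y -> lep x y <-> forall q, K x q <= K y q.
Proof.
move=> ox oy; apply: kapP; try exact: okn4.
  by case/andP: ox. by case/andP: oy.
Qed.

Lemma joinEq x y j : okp n x -> okp n y -> okp n j -> lep x j -> lep y j ->
  (forall L, okp n L -> lep x L -> lep y L -> lep j L) ->
  forall q, K j q = maxn (K x q) (K y q).
Proof.
move=> ox oy oj xj yj H q.
have [w [ow Kw]] := joinR ox oy.
have jw : lep j w.
  apply: H => //; apply/lepK => // r; rewrite /K Kw ?leq_maxl ?leq_maxr //.
have := (proj1 (lepK oj ow) jw q); have := (proj1 (lepK ox oj) xj q);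
have := (proj1 (lepK oy oj) yj q); rewrite /K Kw; lia.
Qed.

Lemma meetEq x y j : okp n x -> okp n y -> okp n j -> lep j x -> lep j y ->
  (forall L, okp n L -> lep L x -> lep L y -> lep L j) ->
  forall q, K j q = minn (K x q) (K y q).
Proof.
move=> ox oy oj xj yj H q.
have [w [ow Kw]] := meetR hg ox oy.
have jw : lep w j.
  apply: H => //; apply/lepK => // r; rewrite /K Kw ?geq_minl ?geq_minr //.
have := (proj1 (lepK ow oj) jw q); have := (proj1 (lepK oj ox) xj q);
have := (proj1 (lepK oj oy) yj q); rewrite /K Kw; lia.
Qed.

Lemma noN5_pairs (a b c z o : nat * bool) :
  okp n a -> okp n b -> okp n c -> okp n z -> okp n o ->
  lep a b -> ~ lep b a ->
  lep a o -> lep c o -> (forall L, okp n L -> lep a L -> lep c L -> lep o L) ->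
  lep b o -> (forall L, okp n L -> lep b L -> lep c L -> lep o L) ->
  lep z a -> lep z c -> (forall L, okp n L -> lep L a -> lep L c -> lep L z) ->
  lep z b -> (forall L, okp n L -> lep L b -> lep L c -> lep L z) -> False.
Proof.
move=> oa ob oc oz oo ab nba ao co Jac bo Jbc za zc Mac zb Mbc.
apply: nba; apply/lepK => // q.
apply: (n5nat (proj1 (lepK oa ob) ab q) (c := K c q)).
  by rewrite -(joinEq oa oc oo ao co Jac q) (joinEq ob oc oo bo co Jbc q).
by rewrite -(meetEq oa oc oz za zc Mac q) (meetEq ob oc oz zb zc Mbc q).
Qed.
End NoN5.

Lemma lep_refl x : lep x x.
Proof. by case: x => e b; rewrite /lep /subb dvdnn /=; case: b; rewrite ?orbT. Qed.

Lemma lep_trans x y z : 0 < x.1 -> 0 < y.1 -> lep x y -> lep y z -> lep x z.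
Proof.
case: x => e1 b1; case: y => e2 b2; case: z => e3 b3 /= e10 e20.
move=> /(subbP b1 e2 b2 e10) h1 /(subbP b2 e3 b3 e20) h2.
by apply/(subbP b1 e3 b3 e10) => d /h1 /h2.
Qed.
Local Open Scope group_scope.

Section Dih.
Variable q : nat.
Hypothesis q_gt1 : (1 < q)%N.
Local Notation gT := ('D_(q.*2))%type.

Lemma dih_gens : exists x y : gT,
  [/\ #[x] = q, #[y] = 2, y \notin <[x]>, x ^ y = x^-1 & <[x]> * <[y]> = [set: gT]].
Proof.
have: [set: gT]%G \isog 'D_(q.*2) by exact: isog_refl.
case/(isoGrpP _ (Grp_dihedral q_gt1)) => _.
have oG : #|[set: gT]| = q.*2 by exact: card_dihedral.
case/existsP=> -[x y] /= /eqP[defG xq y2 xy].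
have{} defG: <[x]> * <[y]> = [set: gT].
  by rewrite -norm_joinEr // norms_cycle xy groupV cycle_id.
have ltqm : (q < q.*2)%N by rewrite -addnn -[X in (X < _)%N]addn0 ltn_add2l ltnW.
have notXy: y \notin <[x]>.
  apply: contraL ltqm => Xy; rewrite -leqNgt -oG -defG mulGSid ?cycle_subG //.
  by rewrite dvdn_leq ?(ltnW q_gt1) // order_dvdn xq.
have oy: #[y] = 2 by apply: nt_prime_order (group1_contra notXy).
have TI : <[x]> :&: <[y]> = 1 by rewrite setIC prime_TIg ?cycle_subG // -orderE oy.
have ox: #[x] = q.
  have := TI_cardMg TI; rewrite defG oG -!orderE oy => h.
  have h2 : (#[x] * 2 = q * 2)%N by rewrite -h muln2.
  by apply/eqP; rewrite -(eqn_pmul2r (isT : 0 < 2)%N) h2.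
by exists x, y.
Qed.
End Dih.





Section Gen.
Variables (gT : finGroupType) (x y : gT) (n : nat).
Hypotheses (ox : #[x] = n) (oy : #[y] = 2) (notXy : y \notin <[x]>)
  (xy : x ^ y = x^-1) (defG : <[x]> * <[y]> = [set: gT]).

Lemma yV : y^-1 = y. Proof. by rewrite invg_expg oy. Qed.

Lemma conj_inX a : a \in <[x]> -> a ^ y = a^-1.
Proof. by case/cycleP=> i ->; rewrite conjXg xy expVgn. Qed.

Lemma L_outy a : a \in <[x]> -> #[a * y] = 2.
Proof.
move=> Xa; apply: nt_prime_order => //.
  have e : a * y * (a * y) = a * a ^ y by rewrite conjgE yV !mulgA.
  by rewrite expgS expg1 e conj_inX // mulgV.
apply: contra notXy => /eqP h.
have -> : y = a^-1 by rewrite -(mulKg a y) h mulg1.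
by rewrite groupV.

Qed.

Lemma L_out g : g \notin <[x]> -> #[g] = 2.
Proof.
have : g \in [set: gT] by rewrite inE.
rewrite -defG => /mulsgP[a c Xa]; rewrite (cycle2g oy) !inE => /orP[] /eqP -> ->.
  by rewrite mulg1 Xa.
by move=> _; exact: L_outy.
Qed.

Lemma L_cyc (C : {group gT}) d : cyclic C -> d %| #|C| -> exists2 g, g \in C & #[g] = d.
Proof.
case/cyclicP=> z ->; rewrite -orderE => dz.
exists (z ^+ (#[z] %/ d)); first by rewrite mem_cycle.
rewrite orderXdiv ?dvdn_div // divnA // mulKn //.
Qed.

Lemma G1 (H : {group gT}) : exists e b, [/\ 0 < e, e %| n & piE H =i Pe e b].
Proof.
set C := (H :&: <[x]>)%G.
have cC : cyclic C by apply: cyclicS (subsetIr _ _) (cycle_cyclic x).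
exists #|C|, (~~ (H \subset <[x]>)); split; first exact: cardG_gt0.
  by rewrite -ox orderE cardSg // subsetIr.
move=> d; rewrite /piE; apply/imageP/idP.
  case=> g Hg ->; rewrite inE; case: (boolP (g \in <[x]>)) => Xg.
    by rewrite order_dvdG // inE Hg Xg.
  rewrite L_out // eqxx andbT orbC; apply/orP; left.
  by apply/subsetPn; exists g.
rewrite inE => /orP[dC | /andP[nb /eqP ->]].
  have [g Cg og] := L_cyc cC dC; exists g => //.
  by move: Cg; rewrite inE => /andP[].
by case/subsetPn: nb => g Hg Xg; exists g => //; rewrite L_out.
Qed.

Lemma G2a (C : {group gT}) : C \subset <[x]> -> piE C =i Pe #|C| false.
Proof.
move=> sC d; rewrite /piE inE orbF; apply/imageP/idP.
  by case=> g Cg ->; rewrite order_dvdG.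
move=> dC; have [g Cg og] := L_cyc (cyclicS sC (cycle_cyclic x)) dC.
by exists g.
Qed.

Lemma G2b (C : {group gT}) : C \subset <[x]> -> <[y]> \subset 'N(C) ->
  piE (C <*> <[y]>)%G =i Pe #|C| true.
Proof.
move=> sC nC d; rewrite /piE /= norm_joinEr // inE /=; apply/imageP/idP.
  case=> g /mulsgP[a c Ca]; rewrite (cycle2g oy) !inE => /orP[] /eqP -> -> ->.
    by rewrite mulg1 order_dvdG.
  by rewrite L_outy ?eqxx ?orbT // (subsetP sC).
case/orP=> [dC | /eqP ->].
  have [g Cg og] := L_cyc (cyclicS sC (cycle_cyclic x)) dC.
  by exists g => //; rewrite -[g]mulg1 mem_mulg.
exists y; last by rewrite oy.
by have := mem_mulg (group1 C) (cycle_id y); rewrite mul1g.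
Qed.

Lemma G2 e b : e %| n -> exists H : {group gT}, piE H =i Pe e b.
Proof.
move=> en; set K := <[x ^+ (n %/ e)]>%G.
have n0 : 0 < n by rewrite -ox order_gt0.
have oK : #|K| = e.
  by rewrite /= -orderE orderXdiv ox ?dvdn_div // divnA // mulKn.
have sK : K \subset <[x]> by rewrite cycle_subG mem_cycle.
case: b.
  exists (K <*> <[y]>)%G; rewrite -oK; apply: G2b => //.
  by rewrite norms_cycle conjXg xy expVgn groupV cycle_id.
by exists K; rewrite -oK; apply: G2a.
Qed.
End Gen.

Local Open Scope nat_scope.
Definition JP n (x y j : nat * bool) :=
  [/\ lep x j, lep y j & forall L, okp n L -> lep x L -> lep y L -> lep j L].
Definition MP n (x y m : nat * bool) :=
  [/\ lep m x, lep m y & forall L, okp n L -> lep L x -> lep L y -> lep L m].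

Lemma okp_gt0 n x : okp n x -> 0 < x.1.
Proof. by case/andP. Qed.

Lemma ifpairs n (g : N5 -> nat * bool) :
  (forall i, okp n (g i)) -> (forall i j, N5_le i j -> lep (g i) (g j)) ->
  (forall L, okp n L -> lep (g N5_a) L -> lep (g N5_c) L -> lep (g N5_1) L) ->
  (forall L, okp n L -> lep L (g N5_b) -> lep L (g N5_c) -> lep L (g N5_0)) ->
  (forall i j, JP n (g i) (g j) (g (N5_join i j))) /\
  (forall i j, MP n (g i) (g j) (g (N5_meet i j))).
Proof.
move=> ok mono Jac Mbc.
have jle x y : lep x y -> JP n x y y by move=> h; split=> //; apply: lep_refl.
have jge x y : lep y x -> JP n x y x by move=> h; split=> //; apply: lep_refl.
have mle x y : lep x y -> MP n x y x by move=> h; split=> //; apply: lep_refl.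
have mge x y : lep y x -> MP n x y y by move=> h; split=> //; apply: lep_refl.
have tr i j L : N5_le i j -> lep L (g i) -> okp n L -> lep L (g j).
  move=> ij Li oL; apply: lep_trans Li (mono _ _ ij); [exact: okp_gt0 oL | exact: okp_gt0 (ok i)].
have tr2 i j L : N5_le i j -> lep (g j) L -> lep (g i) L.
  move=> ij jL; apply: lep_trans (mono _ _ ij) jL; exact: okp_gt0 (ok _).
split; case; case => /=; try (apply: jle; apply: mono; done);
  try (apply: jge; apply: mono; done); try (apply: mle; apply: mono; done);
  try (apply: mge; apply: mono; done).
all: rewrite /N5_join /N5_meet /=.
- split; try (apply: mono; done); move=> L oL h1 h2; apply: Jac => //.
- split; try (apply: mono; done); move=> L oL h1 h2; apply: Jac => //.
  exact: (tr2 N5_a N5_b).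
- split; try (apply: mono; done); move=> L oL h1 h2; apply: Jac => //.
- split; try (apply: mono; done); move=> L oL h1 h2; apply: Jac => //.
  exact: (tr2 N5_a N5_b).
- split; try (apply: mono; done); move=> L oL h1 h2; apply: Mbc => //.
  exact: (tr N5_a N5_b).
- split; try (apply: mono; done); move=> L oL h1 h2; apply: Mbc => //.
- split; try (apply: mono; done); move=> L oL h1 h2; apply: Mbc => //.
  exact: (tr N5_a N5_b).
- split; try (apply: mono; done); move=> L oL h1 h2; apply: Mbc => //.
Qed.

Section Glue.
Local Open Scope group_scope.
Variables (gT : finGroupType) (x y : gT) (n : nat).
Hypotheses (ox : #[x] = n) (oy : #[y] = 2) (notXy : y \notin <[x]>)
  (xy : x ^ y = x^-1) (defG : <[x]> * <[y]> = [set: gT]).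

Lemma rep (H : {group gT}) : exists r, okp n r /\ piE H =i Pe r.1 r.2.
Proof.
have [e [b [e0 en E]]] := G1 ox oy notXy xy defG H.
by exists (e, b); rewrite /okp /= e0 en.
Qed.

Lemma real r : okp n r -> exists H : {group gT}, piE H =i Pe r.1 r.2.
Proof. by case/andP=> _ rn; apply: (G2 ox oy notXy xy). Qed.

Lemma le_rep (A B : {group gT}) rA rB : (0 < rA.1)%N ->
  piE A =i Pe rA.1 rA.2 -> piE B =i Pe rB.1 rB.2 -> piE_le A B <-> lep rA rB.
Proof.
move=> r0 EA EB; rewrite /piE_le /lep; split.
  move=> S; apply/(subbP rA.2 rB.1 rB.2 r0) => d; rewrite -EA -EB; exact: S.
move/(subbP rA.2 rB.1 rB.2 r0) => S d; rewrite EA EB; exact: S.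
Qed.

Lemma if_group (g : N5 -> nat * bool) :
  (forall i, okp n (g i)) -> (forall i j, N5_le i j -> lep (g i) (g j)) ->
  (forall L, okp n L -> lep (g N5_a) L -> lep (g N5_c) L -> lep (g N5_1) L) ->
  (forall L, okp n L -> lep L (g N5_b) -> lep L (g N5_c) -> lep L (g N5_0)) ->
  (forall i j, lep (g i) (g j) -> lep (g j) (g i) -> i = j) ->
  has_N5_sublattice [set: gT]%G.
Proof.
move=> ok mono Jac Mbc inj.
have [JPs MPs] := ifpairs ok mono Jac Mbc.
have [H0 E0] := real (ok N5_0); have [Ha Ea] := real (ok N5_a).
have [Hb Eb] := real (ok N5_b); have [Hc Ec] := real (ok N5_c).
have [H1 E1] := real (ok N5_1).
pose f i := match i with N5_0 => H0 | N5_a => Ha | N5_b => Hb | N5_c => Hc | N5_1 => H1 end.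
have Ef i : piE (f i) =i Pe (g i).1 (g i).2 by case: i.
have g0 i : (0 < (g i).1)%N by case/andP: (ok i).
exists f; split.
- by move=> i; apply: subsetT.
- move=> i j E; apply: inj.
    by apply/(le_rep (g0 i) (Ef i) (Ef j)) => d; rewrite E.
  by apply/(le_rep (g0 j) (Ef j) (Ef i)) => d; rewrite E.
- move=> i j; have [h1 h2 h3] := JPs i j; split.
  + exact/(le_rep (g0 _) (Ef _) (Ef _)).
  + exact/(le_rep (g0 _) (Ef _) (Ef _)).
  move=> L _ hA hB; have [r [okr Er]] := rep L.
  apply/(le_rep (g0 _) (Ef _) Er); apply: h3 => //.
    exact/(le_rep (g0 _) (Ef _) Er).
  exact/(le_rep (g0 _) (Ef _) Er).
- move=> i j; have [h1 h2 h3] := MPs i j; split.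
  + exact/(le_rep (g0 _) (Ef _) (Ef _)).
  + exact/(le_rep (g0 _) (Ef _) (Ef _)).
  move=> L _ hA hB; have [r [okr Er]] := rep L.
  have r0 : (0 < r.1)%N by case/andP: okr.
  apply/(le_rep r0 Er (Ef _)); apply: h3 => //.
    exact/(le_rep r0 Er (Ef _)).
  exact/(le_rep r0 Er (Ef _)).
Qed.

Lemma onlyif_group : ~~ (4 %| n)%N -> Hg n -> ~ has_N5_sublattice [set: gT]%G.
Proof.
move=> n4 hg [f [_ inj J M]].
have [ra [oa Ea]] := rep (f N5_a); have [rb [ob Eb]] := rep (f N5_b).
have [rc [oc Ec]] := rep (f N5_c); have [rz [oz Ez]] := rep (f N5_0).
have [ro [oo Eo]] := rep (f N5_1).
have p0 r : okp n r -> (0 < r.1)%N by case/andP.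
have lr A B rA rB := @le_rep A B rA rB.
have [ab _ _] := J N5_a N5_b; have [ao co Jac] := J N5_a N5_c.
have [bo _ Jbc] := J N5_b N5_c; have [za zc Mac] := M N5_a N5_c.
have [zb _ Mbc] := M N5_b N5_c.
rewrite /N5_join /N5_meet /= in ab ao co Jac bo Jbc za zc Mac zb Mbc.
apply: (noN5_pairs n4 hg oa ob oc oz oo).
- exact/(lr _ _ _ _ (p0 _ oa) Ea Eb).
- move=> ba; have ab' := (proj1 (lr _ _ _ _ (p0 _ oa) Ea Eb) ab).
  have ba' := (proj2 (lr _ _ _ _ (p0 _ ob) Eb Ea) ba).
  suff : N5_a = N5_b by [].
  by apply: inj => d; apply/idP/idP; [apply: ab | apply: ba'].
- exact/(lr _ _ _ _ (p0 _ oa) Ea Eo).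
- exact/(lr _ _ _ _ (p0 _ oc) Ec Eo).
- move=> L oL aL cL; have [HL EL] := real oL.
  apply/(lr _ _ _ _ (p0 _ oo) Eo EL); apply: Jac; first exact: subsetT.
    exact/(lr _ _ _ _ (p0 _ oa) Ea EL).
  exact/(lr _ _ _ _ (p0 _ oc) Ec EL).
- exact/(lr _ _ _ _ (p0 _ ob) Eb Eo).
- move=> L oL aL cL; have [HL EL] := real oL.
  apply/(lr _ _ _ _ (p0 _ oo) Eo EL); apply: Jbc; first exact: subsetT.
    exact/(lr _ _ _ _ (p0 _ ob) Eb EL).
  exact/(lr _ _ _ _ (p0 _ oc) Ec EL).
- exact/(lr _ _ _ _ (p0 _ oz) Ez Ea).
- exact/(lr _ _ _ _ (p0 _ oz) Ez Ec).
- move=> L oL aL cL; have [HL EL] := real oL.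
  apply/(lr _ _ _ _ (p0 _ oL) EL Ez); apply: Mac; first exact: subsetT.
    exact/(lr _ _ _ _ (p0 _ oL) EL Ea).
  exact/(lr _ _ _ _ (p0 _ oL) EL Ec).
- exact/(lr _ _ _ _ (p0 _ oz) Ez Eb).
- move=> L oL aL cL; have [HL EL] := real oL.
  apply/(lr _ _ _ _ (p0 _ oL) EL Ez); apply: Mbc; first exact: subsetT.
    exact/(lr _ _ _ _ (p0 _ oL) EL Eb).
  exact/(lr _ _ _ _ (p0 _ oL) EL Ec).
Qed.
End Glue.

Local Open Scope nat_scope.
Lemma inj_from n (g : N5 -> nat * bool) :
  (forall i, okp n (g i)) -> (forall i j, N5_le i j -> lep (g i) (g j)) ->
  ~ lep (g N5_a) (g N5_0) -> ~ lep (g N5_c) (g N5_0) -> ~ lep (g N5_b) (g N5_a) ->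
  ~ lep (g N5_c) (g N5_b) -> ~ lep (g N5_1) (g N5_b) -> ~ lep (g N5_1) (g N5_c) ->
  forall i j, lep (g i) (g j) -> lep (g j) (g i) -> i = j.
Proof.
move=> ok mono n1 n2 n3 n4 n5 n6.
have tr i j k : lep (g i) (g j) -> lep (g j) (g k) -> lep (g i) (g k).
  apply: lep_trans; exact: okp_gt0 (ok _).
case; case => // h1 h2; exfalso;
  try (apply: n1; done); try (apply: n2; done); try (apply: n3; done);
  try (apply: n4; done); try (apply: n5; done); try (apply: n6; done).
all: try (apply: n1; apply: (tr _ N5_b); [apply: mono|]; done).
all: try (apply: n1; apply: (tr _ N5_1); [apply: mono|]; done).
all: try (apply: n4; apply: (tr _ N5_a); [|apply: mono]; done).
all: try (apply: n5; apply: (tr _ N5_a); [|apply: mono]; done).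
Qed.

Definition N5pairs n (g : N5 -> nat * bool) :=
  [/\ forall i, okp n (g i), forall i j, N5_le i j -> lep (g i) (g j),
      forall L, okp n L -> lep (g N5_a) L -> lep (g N5_c) L -> lep (g N5_1) L,
      forall L, okp n L -> lep L (g N5_b) -> lep L (g N5_c) -> lep L (g N5_0) &
      forall i j, lep (g i) (g j) -> lep (g j) (g i) -> i = j].

Lemma ndvd_lt d m : 0 < m -> m < d -> ~~ (d %| m).
Proof. by move=> m0 md; apply/negP => /(dvdn_leq m0); rewrite leqNgt md. Qed.

Lemma inst1 n p0 : prime p0 -> odd p0 -> 4 * p0 %| n ->
  exists g, N5pairs n g.
Proof.
move=> pp op dn.
have p2 : 2 < p0.
  have := prime_gt1 pp; case: p0 pp op {dn} => [|[|[|]]] //.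
pose g i := match i with N5_0 => (2, false) | N5_a => (p0, true)
  | N5_b => (2 * p0, false) | N5_c => (4, false) | N5_1 => (4 * p0, false) end.
have d1 : 2 %| 4 * p0 by apply: dvdn_mulr.
have d2 : p0 %| 4 * p0 by apply: dvdn_mull.
have d3 : 2 * p0 %| 4 * p0 by apply: dvdn_mul.
have d4 : 4 %| 4 * p0 by apply: dvdn_mulr.
have d5 : p0 %| 2 * p0 by apply: dvdn_mull.
have d6 : 2 %| 2 * p0 by apply: dvdn_mulr.
have np2 : (p0 == 2) = false by apply/eqP => E; rewrite E in op.
have ok i : okp n (g i).
  rewrite /okp; apply/andP; split; first by case: i => /=; lia.
  by case: i => /=; apply: (dvdn_trans _ dn).
have mono i j : N5_le i j -> lep (g i) (g j).
  case: i; case: j => //= _; rewrite /lep /subb /= ?np2 ?d1 ?d2 ?d3 ?d4 ?d5 ?d6 ?dvdnn ?orbT //.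
exists g; split => //.
- have c4 : coprime 4 p0 by apply: (@coprimeXl 2 2); rewrite prime_coprime // dvdn2 op.
  case=> e bL; rewrite /okp /lep /subb /= np2 /= => _ /andP[pe _] /andP[fe _].
  by move: pe fe; rewrite !orbF => pe fe; rewrite Gauss_dvd // pe fe.
- case=> e bL; rewrite /okp /lep /subb /= !andbF !orbF => /andP[e0 en].
  move=> /andP[e2p _] /andP[e4 _]; apply/andP; split; last by case: bL; rewrite ?orbT.
  have : e %| gcdn (2 * p0) (2 * 2) by rewrite dvdn_gcd e2p.
  rewrite -muln_gcdr.
  suff -> : gcdn p0 2 = 1 by [].
  have : coprime p0 2 by rewrite coprime_sym prime_coprime // dvdn2 op.
  by move/eqP.
apply: inj_from => //; rewrite /lep /subb /= ?np2 ?andbF ?orbF ?andbT; apply/negP.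
- by apply: ndvd_lt.
- rewrite (_ : (2 * p0 == 2) = false) ?orbF; last by apply/eqP; lia.
  by apply: ndvd_lt; lia.
- by rewrite -[4]/(2 * 2) dvdn_pmul2l // dvdn2 op.
- by apply: ndvd_lt; lia.
- by apply: ndvd_lt; lia.
Qed.

Lemma odd_gt2 p : prime p -> odd p -> 2 < p.
Proof. by move=> pp; have := prime_gt1 pp; case: p pp => [|[|[|]]]. Qed.

Lemma inst2 n p0 p1 : prime p0 -> odd p0 -> prime p1 -> odd p1 -> p0 != p1 ->
  2 * (p0 * p1) %| n -> exists g, N5pairs n g.
Proof.
move=> pp0 op0 pp1 op1 ne dn.
have p02 := odd_gt2 pp0 op0; have p12 := odd_gt2 pp1 op1.
pose g i := match i with N5_0 => (1, true) | N5_a => (p0, true)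
  | N5_b => (2 * p0, false) | N5_c => (2 * p1, false) | N5_1 => (p0 * (2 * p1), false) end.
have E : p0 * (2 * p1) = 2 * (p0 * p1) by rewrite mulnCA.
have np0 : (p0 == 2) = false by apply/eqP => h; clear -h p02; lia.
have np1 : (2 * p1 == 2) = false by apply/eqP => h; clear -h p12; lia.
have np2 : (2 * p0 == 2) = false by apply/eqP => h; clear -h p02; lia.
have l2 : 3 * p0 <= p0 * p1 by rewrite mulnC leq_mul2l p12 orbT.
have l3 : 3 * p1 <= p0 * p1 by rewrite leq_mul2r p02 orbT.
have np3 : (p0 * (2 * p1) == 2) = false by apply/eqP => h; rewrite E in h; clear -h l2 p02; lia.
have d1 : p0 %| p0 * (2 * p1) by apply: dvdn_mulr.
have d2 : 2 %| p0 * (2 * p1) by apply: dvdn_mull; apply: dvdn_mulr.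
have d3 : 2 * p0 %| p0 * (2 * p1) by rewrite E dvdn_pmul2l // dvdn_mulr.
have d4 : 2 * p1 %| p0 * (2 * p1) by apply: dvdn_mull.
have d5 : p0 %| 2 * p0 by apply: dvdn_mull.
have d6 : 2 %| 2 * p0 by apply: dvdn_mulr.
have d7 : 2 %| 2 * p1 by apply: dvdn_mulr.
have ok i : okp n (g i).
  rewrite /okp; apply/andP; split; first by have q0 := prime_gt0 pp0; have q1 := prime_gt0 pp1; case: i => /=; rewrite ?muln_gt0 ?q0 ?q1.
  by case: i => /=; apply: (dvdn_trans _ dn); rewrite -E.
have mono i j : N5_le i j -> lep (g i) (g j).
  case: i; case: j => //= _; rewrite /lep /subb /= ?np0 ?d1 ?d2 ?d3 ?d4 ?d5 ?d6 ?d7 ?dvdnn ?dvd1n ?orbT //.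
have cop : coprime p0 (2 * p1).
  rewrite coprimeMr coprime_sym prime_coprime // dvdn2 op0 /=.
  by rewrite prime_coprime // dvdn_prime2 // ne.
exists g; split => //.
- case=> e bL; rewrite /okp /lep /subb /= np0 np1 /= => _ /andP[pe _] /andP[fe _].
  by move: pe fe; rewrite !orbF => pe fe; rewrite Gauss_dvd // pe fe.
- case=> e bL; rewrite /okp /lep /subb /= !andbF !orbF => /andP[e0 en].
  move=> /andP[e2p _] /andP[e4 _]; apply/andP; split; last by case: bL; rewrite ?orbT.
  have : e %| gcdn (2 * p0) (2 * p1) by rewrite dvdn_gcd e2p.
  rewrite -muln_gcdr.
  have -> : gcdn p0 p1 = 1.
    by apply/eqP; rewrite -/(coprime p0 p1) prime_coprime // dvdn_prime2.
  by case/dvd2 => ->.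
apply: inj_from => //; rewrite /lep /subb /= ?np0 ?np1 ?np2 ?np3 ?andbF ?orbF ?andbT; apply/negP.
- by apply: ndvd_lt => //; exact: ltnW p02.
- by apply: ndvd_lt => //; clear -p12; lia.
- by apply: ndvd_lt; clear -p02; lia.
- by rewrite dvdn_pmul2l // dvdn_prime2 // eq_sym ne.
- by apply: ndvd_lt; rewrite ?E; clear -l2 p02; lia.
- by apply: ndvd_lt; rewrite ?E; clear -l3 p12; lia.
Qed.

Lemma hg_odd n : odd n -> Hg n.
Proof.
move=> on e1 e2 d1 _ ev1; have := dvdn_trans ev1 d1; by rewrite dvdn2 on.
Qed.

Lemma n4_odd n : odd n -> ~~ (4 %| n).
Proof. by move=> on; apply/negP => /(dvdn_trans (isT : 2 %| 4)); rewrite dvdn2 on. Qed.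

Lemma key2p p t e : prime p -> e %| 2 * p ^ t -> 2 %| e -> e != 2 -> 2 * p %| e.
Proof.
move=> pp de /dvdnP[e' E] ne; subst e; rewrite mulnC in de ne *.
rewrite dvdn_pmul2l // in de; case/(dvdn_pfactor _ _ pp): de ne => j _ -> ne.
case: j ne => [|j] ne; first by rewrite expn0 muln1 eqxx in ne.
by rewrite dvdn_pmul2l // expnSr dvdn_mull.
Qed.

Lemma hg_pow p t : prime p -> Hg (2 * p ^ t).
Proof.
move=> pp e1 e2 d1 d2 ev1 ev2 ne1 ne2; apply/eqP => g2.
have : 2 * p %| gcdn e1 e2 by rewrite dvdn_gcd (key2p pp d1) ?(key2p pp d2).
rewrite g2 -{2}[2]muln1 dvdn_pmul2l // dvdn1 => /eqP p1.
by rewrite p1 in pp.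
Qed.

Lemma n4_pow p t : odd p -> ~~ (4 %| 2 * p ^ t).
Proof.
move=> op; rewrite -[4]/(2 * 2) dvdn_pmul2l // dvdn2 oddX op orbT //.
Qed.

Unset Implicit Arguments.
Set Strict Implicit.
Theorem theorem2p9 (alpha k : nat) (p t : 'I_k -> nat) :
  (1 <= k)%N ->
  (forall i, prime (p i) /\ odd (p i)) ->
  injective p ->
  (forall i, 1 <= t i)%N ->
  let n := (2 ^ alpha * \prod_(i < k) p i ^ t i)%N in
  has_N5_sublattice [set: Dih n]%G <->
  ((2 <= alpha)%N \/ (alpha = 1%N /\ (2 <= k)%N)).
Proof.
move=> k1 hp pinj ht n.
set m := \prod_(i < k) p i ^ t i.
have om : odd m.
  rewrite /m; apply: (big_ind odd) => // [a b oa ob | i _]; first by rewrite oddM oa.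
  by rewrite oddX (proj2 (hp i)) orbT.
have m0 : 0 < m := odd_gt0 om.
pose i0 : 'I_k := Ordinal k1.
have dm0 : p i0 ^ t i0 %| m by rewrite /m (bigD1 i0) //= dvdn_mulr.
have pd i : p i %| p i ^ t i by apply: dvdn_exp.
have n0 : 0 < n by rewrite /n muln_gt0 expn_gt0 m0.
have dn0 : p i0 %| n by rewrite /n dvdn_mull // (dvdn_trans (pd i0)).
have n1 : 1 < n.
  by apply: leq_trans (dvdn_leq n0 dn0); apply: prime_gt1 (proj1 (hp i0)).
have [x [y [ox oy nX xy dG]]] := dih_gens n1.
have nE : n = 2 ^ alpha * m by [].
split.
  move=> H; case: (leqP 2 alpha) => [a2 | a2]; first by left.
  case: (boolP ((alpha == 1) && (2 <= k))) => [/andP[/eqP a1 k2] | nc]; first by right.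
  exfalso.
  suff [n4 hg] : ~~ (4 %| n) /\ Hg n by exact: (onlyif_group ox oy nX xy dG n4 hg H).
  have : (alpha = 0) \/ (alpha = 1) by lia.
  case=> a.
    have on : odd n by rewrite nE a expn0 mul1n.
    by split; [apply: n4_odd | apply: hg_odd].
  have kk : k = 1 by move: nc; rewrite a eqxx /=; lia.
  have mE : m = p i0 ^ t i0.
    rewrite /m (bigD1 i0) //= big1 ?muln1 // => i; rewrite -val_eqE /= => ne.
    by exfalso; have := ltn_ord i; lia.
  rewrite nE a expn1 mE; split; first exact: n4_pow (proj2 (hp i0)).
  exact: hg_pow (proj1 (hp i0)).
case=> [a2 | [a1 k2]].
  have dn : 4 * p i0 %| n.
    rewrite nE; apply: dvdn_mul; first exact: (dvdn_exp2l 2 a2).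
    exact: dvdn_trans (pd i0) dm0.
  have [g [ok mono Jac Mbc inj]] := inst1 (proj1 (hp i0)) (proj2 (hp i0)) dn.
  exact: (if_group ox oy nX xy dG ok mono Jac Mbc inj).
pose i1 : 'I_k := Ordinal k2.
have ne : p i0 != p i1 by apply/eqP => /pinj /(congr1 val).
have d01 : p i0 * p i1 %| m.
  rewrite /m (bigD1 i0) //= (bigD1 i1) //=.
  by apply: dvdn_mul; [exact: pd | apply: dvdn_mulr; exact: pd].
have dn : 2 * (p i0 * p i1) %| n by rewrite nE a1 expn1 dvdn_pmul2l.
have [g [ok mono Jac Mbc inj]] :=
  inst2 (proj1 (hp i0)) (proj2 (hp i0)) (proj1 (hp i1)) (proj2 (hp i1)) ne dn.
exact: (if_group ox oy nX xy dG ok mono Jac Mbc inj).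
Qed.
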